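(* Let $N=\{1,\dots,n\}$. Every set function $s:2^N\to\mathbb{R}$ is a generalized coverage function: there exist a finite set $U$ with $|U|\le 2^{|N|}$, subsets $S_1,\dots,S_n\subseteq U$, a weight function $w:U\to\mathbb{R}$ and a constant $c\in\mathbb{R}$ such that for all $A\subseteq N$, $$s_A = c+\mathbf{w}\Big(\bigcup_{i\in A}S_i\Big),$$ where $\mathbf{w}(S)=\sum_{u\in S}w(u)$ for $S\subseteq U$.
   Context: A generalized coverage function on $N$ is a set function of the form $A\mapsto c+\mathbf{w}(\bigcup_{i\in A}S_i)$ for some collection of subsets $S_1,\dots,S_n$ of a global set $U$, a constant $c\in\mathbb{R}$, and a real weight function $w$ on $U$ (weights may be negative or zero) extended additively to subsets by $\mathbf{w}(S)=\sum_{u\in S}w(u)$. *)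

(* Defs.v *)
From mathcomp Require Import all_boot all_order all_algebra.
Set Implicit Arguments. Unset Strict Implicit. Unset Printing Implicit Defensive.
Import Order.TTheory GRing.Theory Num.Theory.
Local Open Scope ring_scope.

Definition wsum (R : numDomainType) (U : finType) (w : U -> R) (S : {set U}) : R :=
  \sum_(u in S) w u.

Definition gen_coverage (R : numDomainType) (n : nat) (U : finType)
  (S : 'I_n -> {set U}) (w : U -> R) (c : R) (A : {set 'I_n}) : R :=
  c + wsum w (\bigcup_(i in A) S i).

(* Main.v *)
Require Import Defs.
From mathcomp Require Import all_boot all_order all_algebra.
Import Order.TTheory GRing.Theory Num.Theory.
Local Open Scope ring_scope.

Section Aux.
Variable R : comPzRingType.
Variable n : nat.
Notation I := 'I_n.

Lemma prod_sign (J : {set I}) (h : I -> R) :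
  (forall i, h i = if i \in J then -1 else 1) -> \prod_i h i = (-1) ^+ #|J|.
Proof.
move=> H; rewrite (eq_bigr _ (fun i _ => H i)) -big_mkcond /=.
by rewrite prodr_const.
Qed.

Lemma prod_zero (h : I -> R) i : h i = 0 -> \prod_j h j = 0.
Proof. by move=> H; rewrite (bigD1 i) //= H mul0r. Qed.

Lemma sign_sum (B X : {set I}) : B \subset X ->
  \sum_(T : {set I} | (T \subset X) && (B \subset T)) (-1) ^+ #|T|
   = (if B == X then (-1) ^+ #|X| else 0 :> R).
Proof.
move=> BX.
pose F := fun i : I => if i \in X then -1 else 0 : R.
pose G := fun i : I => if i \in B then 0 else 1 : R.
have := @bigA_distr R 0 1 *%R +%R I F G.
rewrite /=.
have -> : \sum_(J in {set I}) \prod_i (if i \in J then F i else G i)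
   = \sum_(T : {set I} | (T \subset X) && (B \subset T)) (-1) ^+ #|T|.
  rewrite [RHS]big_mkcond /=; apply: eq_bigr => J _.
  case: ifP => [/andP[JX BJ]|].
    apply: prod_sign => i; rewrite /F /G.
    case: ifP => iJ; first by rewrite (subsetP JX _ iJ).
    by case: ifP => // iB; rewrite (subsetP BJ _ iB) in iJ.
  move/negbT; rewrite negb_and => /orP[/subsetPn[i iJ iX]|/subsetPn[i iB iJ]].
    by rewrite (bigD1 i) //= iJ /F (negbTE iX) mul0r.
  by rewrite (bigD1 i) //= (negbTE iJ) /G iB mul0r.
move=> <-.
case: eqP => [eBX|/eqP neBX].
  apply: prod_sign => i; rewrite /F /G -eBX.
  by case: (i \in B); rewrite ?addr0 ?add0r.
have : ~~ (X \subset B) by apply: contra neBX => XB; rewrite eqEsubset BX XB.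
case/subsetPn => i iX iB.
by rewrite (bigD1 i) //= /F /G iX (negbTE iB) addNr mul0r.
Qed.

Lemma moebius (f : {set I} -> R) :
  exists w : {set I} -> R, forall X : {set I}, \sum_(T : {set I} | T \subset X) w T = f X.
Proof.
exists (fun T : {set I} => (-1) ^+ #|T| * \sum_(B : {set I} | B \subset T) (-1) ^+ #|B| * f B).
move=> X.
under eq_bigr => T _ do rewrite big_distrr /=.
rewrite (exchange_big_dep (fun B : {set I} => B \subset X)) /=; last first.
  by move=> T B TX BT; apply: subset_trans BT TX.
under eq_bigr => B BX.
  rewrite -big_distrl /= sign_sum //.
  over.
rewrite /= (bigD1 X) //= eqxx big1 ?addr0.
  by rewrite mulrA -exprD addnn -signr_odd odd_double expr0 mul1r.
move=> B /andP[_ /negbTE ->]; by rewrite mul0r.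
Qed.
End Aux.

Theorem theorem1 (R : realFieldType) (n : nat) (s : {set 'I_n} -> R) :
  exists (U : finType) (S : 'I_n -> {set U}) (w : U -> R) (c : R),
    (#|U| <= 2 ^ n)%N /\ forall A : {set 'I_n}, s A = gen_coverage S w c A.
Proof.
have [w hw] := @moebius R n (fun B : {set 'I_n} => - s (~: B)).
exists {set 'I_n}, (fun i => [set T : {set 'I_n} | i \in T]), w, (s set0).
split.
  by rewrite -cardsT -powersetT card_powerset cardsT card_ord.
move=> A; rewrite /gen_coverage /wsum.
set V := \bigcup_(i in A) _.
have tot : \sum_T w T = - s set0.
  have := hw setT; rewrite setCT => <-.
  by apply: eq_bigl => T; rewrite subsetT.
have mem : forall T, (T \notin V) = (T \subset ~: A).
  move=> T; apply/idP/idP => H.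
    apply/subsetP => i iT; rewrite inE; apply/negP => iA; apply/negP: H.
    by rewrite negbK; apply/bigcupP; exists i => //; rewrite inE.
  apply/bigcupP => -[i iA]; rewrite inE => iT.
  by have := subsetP H i iT; rewrite inE iA.
have compl : \sum_(T | T \notin V) w T = - s A.
  have := hw (~: A); rewrite setCK => <-.
  by apply: eq_bigl => T; rewrite mem.
move: tot; rewrite (bigID (fun T => T \in V)) /= compl => tot.
have -> : \sum_(T in V) w T = - s set0 + s A.
  by rewrite -tot addrNK.
by rewrite addrA subrr add0r.
Qed.
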